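(* Let $d_n=2^n\Delta_n+\tfrac12$ for $n\ge0$ and $d_n=0$ for $n<0$. Then for every $n\ge1$, $$d_n-\Big(2-\frac1n\Big)d_{n-1}+\Big(1-\frac1n\Big)d_{n-2}-\Big(4-\frac6n\Big)d_{n-3}+\Big(4-\frac8n\Big)d_{n-4}=0.$$ Consequently, for every $n\ge4$, $$\Delta_n=\frac{1}{n2^n}+\Big(\frac1{2n}-\frac14\Big)\Delta_{n-4}+\Big(\frac12-\frac{3}{4n}\Big)\Delta_{n-3}+\Big(\frac1{4n}-\frac14\Big)\Delta_{n-2}+\Big(1-\frac1{2n}\Big)\Delta_{n-1}.$$
   Context: A fair coin is flipped $n$ times, producing a sequence $x_1,\dots,x_n\in\{H,T\}$ of independent uniformly random outcomes. Alice's score is the number of indices $i\in\{1,\dots,n-1\}$ with $(x_i,x_{i+1})=(H,H)$; Bob's score is the number of indices $i\in\{1,\dots,n-1\}$ with $(x_i,x_{i+1})=(H,T)$. $\Delta_n$ is the probability that Bob's score strictly exceeds Alice's minus the probability that Alice's score strictly exceeds Bob's (so $\Delta_0=0$). *)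

(* Defs.v *)
From mathcomp Require Import all_boot all_order all_algebra.
Set Implicit Arguments. Unset Strict Implicit. Unset Printing Implicit Defensive.
Import Order.TTheory GRing.Theory Num.Theory.
Local Open Scope ring_scope.

(* Coin outcomes: true = H, false = T.  A sequence x_1..x_n is an n.-tuple bool,
   with x_{i+1} = nth false x i (0-based). *)

Definition alice_score (n : nat) (x : n.-tuple bool) : nat :=
  \sum_(i < n.-1) (nth false x i && nth false x i.+1 : nat).

Definition bob_score (n : nat) (x : n.-tuple bool) : nat :=
  \sum_(i < n.-1) (nth false x i && ~~ nth false x i.+1 : nat).

Definition prob (n : nat) (P : pred (n.-tuple bool)) : rat :=
  #|[set x : n.-tuple bool | P x]|%:R / #|{: n.-tuple bool}|%:R.

Definition Delta (n : nat) : rat :=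
  prob (fun x : n.-tuple bool => (alice_score x < bob_score x)%N)
  - prob (fun x : n.-tuple bool => (bob_score x < alice_score x)%N).

Definition dseq (m : int) : rat :=
  match m with
  | Posz n => 2 ^+ n * Delta n + 1 / 2
  | Negz _ => 0
  end.

(* Main.v *)
Require Import Defs.
From mathcomp Require Import all_boot all_order all_algebra.
From mathcomp Require Import zify ring lra.
Import Order.TTheory GRing.Theory Num.Theory.

Fixpoint allseq (n : nat) : seq (seq bool) :=
  if n is n'.+1 then [seq rcons s b | s <- allseq n', b <- [:: true; false]]
  else [:: [::]].

Lemma mem_allseq n s : (s \in allseq n) = (size s == n).
Proof.
elim: n s => [|n IH] s; first by case: s.
apply/allpairsP/idP.
  by case=> [[t b] [/= ht _ ->]]; rewrite size_rcons eqSS -IH.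
case/lastP: s => [//|t b]; rewrite size_rcons eqSS -IH => ht.
by exists (t, b); rewrite /= ht; case: b.
Qed.

Lemma uniq_allseq n : uniq (allseq n).
Proof.
elim: n => [//|n IH].
apply: allpairs_uniq => //.
move=> [s1 b1] [s2 b2] _ _ /= E.
have := congr1 size E; rewrite !size_rcons => /eqP; rewrite eqSS => /eqP hs.
by case: (rcons_inj E) => -> ->.
Qed.

Lemma sum_tuple_allseq (R : zmodType) n (F : seq bool -> R) :
  (\sum_(x : n.-tuple bool) F x = \sum_(s <- allseq n) F s)%R.
Proof.
rewrite -big_enum -(big_map (fun x : n.-tuple bool => val x) xpredT F).
apply: perm_big; apply: uniq_perm.
- by rewrite (map_inj_uniq val_inj) enum_uniq.
- exact: uniq_allseq.
move=> s; rewrite mem_allseq; apply/mapP/idP.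
  by case=> x _ ->; rewrite size_tuple.
move=> hs; exists (Tuple hs) => //; by rewrite mem_enum.
Qed.

Fixpoint al (s : seq bool) : nat :=
  if s is a :: t then (if t is b :: _ then (a && b) + al t else 0) else 0.
Fixpoint bo (s : seq bool) : nat :=
  if s is a :: t then (if t is b :: _ then (a && ~~ b) + bo t else 0) else 0.
Fixpoint rnp (p : bool) (s : seq bool) : nat :=
  if s is a :: t then (a && ~~ p) + rnp a t else 0.
Definition rn s := rnp false s.
Definition hc (s : seq bool) := count id s.

Lemma al_sum s : \sum_(i < (size s).-1) (nth false s i && nth false s i.+1 : nat) = al s.
Proof.
elim: s => [|a t IH]; first by rewrite big_ord0.
case: t IH => [|b t] IH; first by rewrite big_ord0.
rewrite /= big_ord_recl /=; congr (_ + _); rewrite -[RHS]IH /=.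
by apply: eq_bigr => i _; rewrite add0n.
Qed.

Lemma bo_sum s : \sum_(i < (size s).-1) (nth false s i && ~~ nth false s i.+1 : nat) = bo s.
Proof.
elim: s => [|a t IH]; first by rewrite big_ord0.
case: t IH => [|b t] IH; first by rewrite big_ord0.
rewrite /= big_ord_recl /=; congr (_ + _); rewrite -[RHS]IH /=.
by apply: eq_bigr => i _; rewrite add0n.
Qed.

Lemma al_rcons s c : al (rcons s c) = al s + (last false s && c).
Proof.
elim: s => [//|a t IH]; case: t IH => [|b t] IH /=; first by rewrite addn0.
rewrite /= in IH; by rewrite IH addnA.
Qed.

Lemma bo_rcons s c : bo (rcons s c) = bo s + (last false s && ~~ c).
Proof.
elim: s => [//|a t IH]; case: t IH => [|b t] IH /=; first by rewrite addn0.
rewrite /= in IH; by rewrite IH addnA.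
Qed.

Lemma rnp_rcons p s c : rnp p (rcons s c) = rnp p s + (c && ~~ last p s).
Proof.
elim: s p => [|a t IH] p /=; first by rewrite addn0.
by rewrite IH addnA.
Qed.

Lemma rn_rcons s c : rn (rcons s c) = rn s + (c && ~~ last false s).
Proof. exact: rnp_rcons. Qed.

Lemma hc_rcons s c : hc (rcons s c) = hc s + c.
Proof. by rewrite /hc -cats1 count_cat /= addn0. Qed.

Lemma key_id s : bo s + hc s + last false s = 2 * rn s + al s.
Proof.
elim/last_ind: s => [//|s c IH].
rewrite bo_rcons hc_rcons rn_rcons al_rcons last_rcons.
move: IH; case: c; case: (last false s) => /=; lia.
Qed.

Lemma rn_le s : rn s <= size s.
Proof.
rewrite /rn; elim: s false => [//|a t IH] p /=.
by case: a; case: p => /=; rewrite ?add0n ?add1n ?ltnS ?IH // leqW.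
Qed.

Lemma sum_succ (R : nmodType) n (f : seq bool -> R) :
  (\sum_(s <- allseq n.+1) f s = \sum_(s <- allseq n) (f (rcons s true) + f (rcons s false)))%R.
Proof.
have -> : allseq n.+1 = [seq rcons s b | s <- allseq n, b <- [:: true; false]] by [].
rewrite big_allpairs_dep /=.
by apply: eq_bigr => s _; rewrite !big_cons big_nil GRing.addr0.
Qed.

Lemma sum_succn n (f : seq bool -> nat) :
  \sum_(s <- allseq n.+1) f s = \sum_(s <- allseq n) (f (rcons s true) + f (rcons s false)).
Proof.
have -> : allseq n.+1 = [seq rcons s b | s <- allseq n, b <- [:: true; false]] by [].
rewrite big_allpairs_dep /=.
by apply: eq_bigr => s _; rewrite !big_cons big_nil addn0.
Qed.

Definition GHc n h r := \sum_(s <- allseq n) (last false s && (hc s == h) && (rn s == r) : nat).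
Definition GTc n h r := \sum_(s <- allseq n) (~~ last false s && (hc s == h) && (rn s == r) : nat).

Definition GHf n h r := match h, r with
  | h'.+1, r'.+1 => if h' < n then 'C(h', r') * 'C(n - h'.+1, r') else 0
  | _, _ => 0 end.
Definition GTf n h r := match h, r with
  | 0, 0 => 1
  | h'.+1, r'.+1 => if h' < n then 'C(h', r') * 'C(n - h'.+1, r'.+1) else 0
  | _, _ => 0 end.

Lemma GH_succ n h r : GHc n.+1 h r =
  if h is h'.+1 then GHc n h' r + (if r is r'.+1 then GTc n h' r' else 0) else 0.
Proof.
rewrite /GHc sum_succn.
case: h => [|h].
  rewrite big1 // => s _; rewrite !last_rcons hc_rcons /=.
  by rewrite addn1.
case: r => [|r].
  rewrite addn0; apply: eq_bigr => s _.
  rewrite !last_rcons hc_rcons rn_rcons addn1 eqSS /=.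
  by case: (last false s) => /=; rewrite ?addn0 ?addn1 ?andbF.
rewrite /GTc -big_split /=; apply: eq_bigr => s _.
rewrite !last_rcons hc_rcons rn_rcons addn1 eqSS /=.
by case: (last false s) => /=; rewrite ?addn0 ?addn1 ?eqSS ?andbF.
Qed.

Lemma GT_succ n h r : GTc n.+1 h r = GHc n h r + GTc n h r.
Proof.
rewrite /GTc /GHc sum_succn -big_split /=.
apply: eq_bigr => s _.
rewrite !last_rcons !hc_rcons !rn_rcons /= !addn0.
by case: (last false s) => /=; rewrite ?addn0.
Qed.

Lemma G_closed n h r : GHc n h r = GHf n h r /\ GTc n h r = GTf n h r.
Proof.
elim: n h r => [|n IH] h r.
  rewrite /GHc /GTc /= !big_cons !big_nil /=.
  by case: h => [|h]; case: r => [|r].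
have IH1 h1 r1 : GHc n h1 r1 = GHf n h1 r1 by case: (IH h1 r1).
have IH2 h1 r1 : GTc n h1 r1 = GTf n h1 r1 by case: (IH h1 r1).
rewrite GH_succ GT_succ.
case: h => [|h]; case: r => [|r]; rewrite !IH1 ?IH2 /=; split => //.
- by case: h.
- case: h => [|h] /=.
    rewrite bin0n subn1 /=; case: r => [|r] //=; by rewrite bin0.
  case: r => [|r] /=.
    case: ifP => hn; last by rewrite ltnS hn.
    by rewrite ltnS hn subSS !bin0 addn0.
  case: ifP => hn; last by rewrite ltnS hn.
  by rewrite ltnS hn subSS binS mulnDl addnC.
- have [hn|hn|->] := ltngtP h n.
  + rewrite ltnS (ltnW hn) subSS.
    have -> : n - h = (n - h.+1).+1 by rewrite subnSK.
    by rewrite binS mulnDr addnC.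
  + by rewrite ltnS leqNgt hn.
  + by rewrite ltnSn subSS subnn bin0n muln0.
Qed.

Definition sg (s : seq bool) : int := (Posz (al s < bo s) - Posz (bo s < al s))%R.
Definition Dn n : int := (\sum_(s <- allseq n) sg s)%R.
Definition cntAn n := \sum_(s <- allseq n) (last false s && (al s == (bo s).+1) : nat).
Definition cntBn n := \sum_(s <- allseq n) (last false s && (bo s == (al s).+1) : nat).

Lemma sg_step s : (sg (rcons s true) + sg (rcons s false) =
  2 * sg s + Posz (last false s && (al s == (bo s).+1))
   - Posz (last false s && (bo s == (al s).+1)))%R.
Proof.
rewrite /sg !al_rcons !bo_rcons; case: (last false s) => /=; rewrite ?addn0 ?addn1;
set a := al s; set b := bo s.
  case: (ltngtP a b) => h; case: (ltngtP a.+1 b) => h1; case: (ltngtP a b.+1) => h2;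
  case: (ltngtP b a.+1) => h3; case: (ltngtP b.+1 a) => h4;
  case: (eqVneq a b.+1) => h5; case: (eqVneq b a.+1) => h6; simpl; lia.
lia.
Qed.

Lemma Dn_succ n : Dn n.+1 = (2 * Dn n + Posz (cntAn n) - Posz (cntBn n))%R.
Proof.
rewrite /Dn sum_succ /cntAn /cntBn !(big_morph Posz PoszD (erefl (Posz 0))).
rewrite mulr_sumr -big_split -sumrB /=.
by apply: eq_bigr => s _; rewrite sg_step.
Qed.

Lemma size_allseq n s : s \in allseq n -> size s = n.
Proof. by rewrite mem_allseq => /eqP. Qed.

Lemma pick_r n (s : seq bool) (P : nat -> bool) : rn s < n.+1 ->
  \sum_(r < n.+1) (P r && (rn s == r) : nat) = P (rn s).
Proof.
move=> hr; rewrite (bigD1 (Ordinal hr)) //= eqxx andbT big1 ?addn0 // => i hi.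
case: eqP => [E|]; last by rewrite andbF.
by move: hi; rewrite -val_eqE /= E eqxx.
Qed.

Lemma last_hc s : last false s -> 0 < hc s.
Proof. by case/lastP: s => [//|t c]; rewrite last_rcons hc_rcons => ->; rewrite addn1. Qed.

Lemma cntA_eq n : cntAn n = \sum_(k < n) GHf n k.*2.+2 k.+1.
Proof.
rewrite /cntAn.
have E : forall s, s \in allseq n -> (last false s && (al s == (bo s).+1) : nat) =
   \sum_(r < n.+1) (last false s && (hc s == r.*2) && (rn s == r) : nat).
  move=> s hs; rewrite (@pick_r n s (fun r => last false s && (hc s == r.*2))); last first.
    by rewrite ltnS -(@size_allseq n s hs) rn_le.
  congr (nat_of_bool _); have := key_id s; case: (last false s) => //= h.
  apply/eqP/eqP; lia.
rewrite (eq_big_seq _ E) exchange_big /=.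
rewrite big_ord_recl /= big1_seq ?add0n; last first.
  move=> s _; case hl: (last false s) => //=.
  by rewrite (gtn_eqF (@last_hc _ hl)).
apply: eq_bigr => k _.
have [h1 _] := G_closed n k.+1.*2 k.+1.
rewrite -[RHS]/(GHf n k.+1.*2 k.+1) -h1 /GHc.
by apply: eq_bigr => s _; rewrite /bump /= add1n.
Qed.

Lemma cntB_eq n : cntBn n = \sum_(k < n) GHf n k.+1.*2 k.+2.
Proof.
rewrite /cntBn.
have E : forall s, s \in allseq n -> (last false s && (bo s == (al s).+1) : nat) =
   \sum_(r < n.+1) (last false s && ((hc s).+2 == r.*2) && (rn s == r) : nat).
  move=> s hs; rewrite (@pick_r n s (fun r => last false s && ((hc s).+2 == r.*2))); last first.
    by rewrite ltnS -(@size_allseq n s hs) rn_le.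
  congr (nat_of_bool _); have := key_id s; case: (last false s) => //= h.
  apply/eqP/eqP; lia.
rewrite (eq_big_seq _ E) exchange_big /=.
rewrite big_ord_recl /= big1_seq ?add0n; last first.
  move=> s _; by rewrite andbF.
transitivity (\sum_(k < n) GHf n k.*2 k.+1).
  apply: eq_bigr => k _.
  have [h1 _] := G_closed n k.*2 k.+1.
  rewrite -h1 /GHc.
  by apply: eq_bigr => s _; rewrite /bump /= add1n doubleS !eqSS.
clear E; case: n => [|m]; first by rewrite !big_ord0.
rewrite big_ord_recl big_ord_recr /= !add0n.
rewrite ifN; last by apply/negP; lia.
by rewrite addn0; apply: eq_bigr => i _; rewrite /bump /= add1n.
Qed.

Definition tD n k := if k.*2.+2 <= n then 'C(k.*2.+1, k.+1) * 'C(n - k.*2.+2, k.+1) else 0.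
Definition Df n : int := (\sum_(k < n) Posz (tD n k))%R.

Lemma tD_step n k : tD n.+1 k + GHf n k.+1.*2 k.+2 = 2 * tD n k + GHf n k.*2.+2 k.+1.
Proof.
rewrite /tD /=.
have [h|h] := leqP k.*2.+2 n.
  rewrite ifT; last lia.
  rewrite subSn // (binS (n - k.*2.+2) k).
  have -> : 'C(k.*2.+1, k) = 'C(k.*2.+1, k.+1).
    rewrite -(bin_sub (n:=k.*2.+1) (m:=k)); last lia.
    congr binomial; rewrite -addnn; lia.
  set a := 'C(k.*2.+1, k.+1); set b := 'C(n - k.*2.+2, k.+1); set c := 'C(n - k.*2.+2, k).
  rewrite mulnDr; lia.
rewrite addn0; case: ifP => // h2.
have -> : n.+1 - k.*2.+2 = 0 by lia.
by rewrite bin0n muln0 muln0.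
Qed.

Lemma Df_succ n : Df n.+1 = (2 * Df n + Posz (cntAn n) - Posz (cntBn n))%R.
Proof.
rewrite /Df big_ord_recr /= {2}/tD.
rewrite ifN; last by apply/negP; lia.
rewrite addr0 cntA_eq cntB_eq !(big_morph Posz PoszD (erefl (Posz 0))).
rewrite mulr_sumr -big_split -sumrB.
apply: eq_bigr => k _.
have := tD_step n k; move: (tD n.+1 k) (tD n k) (GHf n k.+1.*2 k.+2) (GHf n k.*2.+2 k.+1).
move=> a b c d h /=; lia.
Qed.

Lemma Dn_Df n : Dn n = Df n.
Proof.
elim: n => [|n IH]; first by rewrite /Dn /Df big_ord0 /= big_cons big_nil.
by rewrite Dn_succ Df_succ IH.
Qed.

Local Open Scope ring_scope.

Lemma card_set_sum n (P : pred (n.-tuple bool)) :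
  #|[set x | P x]| = (\sum_(x : n.-tuple bool) (P x : nat))%N.
Proof.
rewrite -sum1_card big_mkcond /=; apply: eq_bigr => x _.
by rewrite inE; case: (P x).
Qed.

Lemma alice_al n (x : n.-tuple bool) : alice_score x = al x.
Proof. by rewrite /alice_score -al_sum size_tuple. Qed.
Lemma bob_bo n (x : n.-tuple bool) : bob_score x = bo x.
Proof. by rewrite /bob_score -bo_sum size_tuple. Qed.

Lemma Delta_Dn n : Delta n = (Dn n)%:~R / 2 ^+ n.
Proof.
rewrite /Delta /prob card_tuple card_bool natrX -mulrBl; congr (_ / _).
rewrite !card_set_sum !natr_sum -sumrB.
transitivity (\sum_(x : n.-tuple bool) (((al x < bo x)%N : nat)%:R - ((bo x < al x)%N : nat)%:R : rat)).
  by apply: eq_bigr => x _; rewrite alice_al bob_bo.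
rewrite (@sum_tuple_allseq _ n (fun s => (((al s < bo s)%N : nat)%:R - ((bo s < al s)%N : nat)%:R : rat))).
rewrite /Dn rmorph_sum; apply: eq_bigr => s _.
by rewrite /sg rmorphB.
Qed.

Definition gg (m : nat) : rat := ('C(m.*2, m))%:R.
Definition bz (m : nat) (z : int) : rat :=
  match z with Posz n => if (3 * m <= n)%N then ('C(n - m.*2, m))%:R else 0 | Negz _ => 0 end.
Definition EE (N : nat) (z : int) : rat := \sum_(m < N) gg m * bz m z.

Lemma bz_neg m z : z < 0 -> bz m z = 0.
Proof. by case: z. Qed.

Lemma bz_small m z : z < (3 * m)%N%:Z -> bz m z = 0.
Proof.
case: z => [n|k] //=; rewrite ltz_nat => h.
by rewrite leqNgt h.
Qed.

Lemma gg_rec_nat m : (m.+1 * 'C(m.+1.*2, m.+1) = (4 * m + 2) * 'C(m.*2, m))%N.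
Proof.
have e1 := mul_bin_diag (m.+1.*2) m.
have e2 := mul_bin_down (m.*2.+1) m.
rewrite /= in e1 e2.
have e3 : (m.*2.+1 - m = m.+1)%N by lia.
rewrite e3 in e2; rewrite doubleS in e1 *.
rewrite -e1.
move: e2; set c1 := 'C(m.*2.+1, m); set c0 := 'C(m.*2, m) => e2.
nia.
Qed.

Lemma gg_rec m : (m.+1)%:R * gg m.+1 = (4 * m%:R + 2) * gg m.
Proof.
rewrite /gg -natrM gg_rec_nat natrM natrD natrM.
by [].
Qed.

Lemma intr_pos n : (Posz n)%:~R = n%:R :> rat.
Proof. by []. Qed.

Lemma bz_rel m z : (z%:~R - ((3 * m)%N)%:R) * bz m z = (z%:~R - (m.*2)%:R) * bz m (z - 1).
Proof.
case: z => [n|k]; last first.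
  rewrite bz_neg // bz_neg ?mulr0 //.
case: n => [|n].
  rewrite (@bz_neg m (0 - 1)) // mulr0.
  case: m => [|m]; first by rewrite subrr mul0r.
  by rewrite /bz /= mulr0.
have -> : Posz n.+1 - 1 = Posz n by rewrite -addn1 PoszD addrK.
rewrite !intr_pos /bz.
have [h|h] := leqP (3 * m) n.
  rewrite (leqW h) -!natrB; [|lia|lia].
  rewrite -!natrM; congr (_%:R).
  have e := mul_bin_down (n.+1 - m.*2) m.
  have e1 : ((n.+1 - m.*2).-1 = n - m.*2)%N by lia.
  have e2 : (n.+1 - m.*2 - m = n.+1 - 3 * m)%N by lia.
  by rewrite e1 e2 in e; rewrite -e.
rewrite mulr0; case: ifP => h2; last by rewrite mulr0.
have -> : n.+1 = (3 * m)%N by lia.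
by rewrite subrr mul0r.
Qed.

Lemma bz_pas m z : bz m.+1 z - bz m.+1 (z - 1) = bz m (z - 3).
Proof.
case: z => [n|k]; last first.
  by rewrite !bz_neg ?subrr.
have [h|h] := ltnP n (3 * m.+1).
  rewrite !bz_small ?subrr //; lia.
have [k hk] : exists k, n = k.+3 by exists (n - 3)%N; lia.
subst n.
have -> : Posz k.+3 - 1 = Posz k.+2 by rewrite -(addn1 k.+2) PoszD addrK.
have -> : Posz k.+3 - 3 = Posz k by rewrite -(addn3 k) PoszD addrK.
rewrite /bz /= ifT; last lia.
rewrite [in RHS]ifT; last lia.
have [h1|h1] := leqP (3 * m.+1) k.+2.
  have e : (k.+3 - m.+1.*2 = (k.+2 - m.+1.*2).+1)%N by lia.
  have e2 : (k.+2 - m.+1.*2 = k - m.*2)%N by lia.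
  by rewrite e binS natrD e2 addrAC subrr add0r.
have e : (k = 3 * m)%N by lia.
subst k; rewrite subr0.
have -> : ((3 * m).+3 - m.+1.*2 = m.+1)%N by lia.
have -> : ((3 * m) - m.*2 = m)%N by lia.
by rewrite !binn.
Qed.

Definition FF m z := m%:R * gg m * (3 * bz m z - 5 * bz m (z - 1) + 2 * bz m (z - 2)).
Definition WW m (z : int) := z%:~R * bz m z - (2 * z%:~R - 1) * bz m (z - 1)
  + (z%:~R - 1) * bz m (z - 2) - (4 * z%:~R - 6) * bz m (z - 3)
  + (4 * z%:~R - 8) * bz m (z - 4).

Lemma W_tel m z : gg m * WW m z = FF m z - FF m.+1 z.
Proof.
have p1 := bz_pas m z.
have p2 := bz_pas m (z - 1).
have e11 : z - 1 - 1 = z - 2 by ring.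
have e13 : z - 1 - 3 = z - 4 by ring.
have e31 : z - 3 - 1 = z - 4 by ring.
rewrite e11 e13 in p2.
have r1 := bz_rel m z.
have r2 := bz_rel m (z - 1); rewrite e11 in r2.
have r3 := bz_rel m (z - 3); rewrite e31 in r3.
have q : 3 * bz m.+1 z - 5 * bz m.+1 (z - 1) + 2 * bz m.+1 (z - 2)
   = 3 * bz m (z - 3) - 2 * bz m (z - 4).
  rewrite -p1 -p2; ring.
rewrite /FF gg_rec q.
have key :
  ((z%:~R - (3 * m)%N%:R) * bz m z - (z%:~R - (m.*2)%:R) * bz m (z - 1))
  - (((z-1)%:~R - (3 * m)%N%:R) * bz m (z-1) - ((z-1)%:~R - (m.*2)%:R) * bz m (z - 2))
  - 4 * (((z-3)%:~R - (3 * m)%N%:R) * bz m (z-3) - ((z-3)%:~R - (m.*2)%:R) * bz m (z - 4)) = 0 :> rat.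
  by rewrite r1 r2 r3 !subrr; ring.
apply/eqP; rewrite -subr_eq0; apply/eqP.
rewrite -[RHS](mulr0 (gg m)) -key /WW.
rewrite -mul2n !natrM !intrB.
ring.
Qed.

Lemma EE_rec N z : z < (3 * N)%N%:Z ->
  z%:~R * EE N z - (2 * z%:~R - 1) * EE N (z - 1) + (z%:~R - 1) * EE N (z - 2)
  - (4 * z%:~R - 6) * EE N (z - 3) + (4 * z%:~R - 8) * EE N (z - 4) = 0.
Proof.
move=> hz.
have h : \sum_(m < N) gg m * WW m z = 0.
  rewrite -(big_mkord xpredT (fun m => gg m * WW m z)).
  rewrite (telescope_sumr_eq (fun k => - FF k z)) ?leq0n //; last first.
    by move=> k _; rewrite W_tel opprK addrC.
  rewrite /FF (@bz_small N z) // (@bz_small N (z - 1)); last lia.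
  rewrite (@bz_small N (z - 2)); last lia.
  by rewrite !mulr0 mul0r oppr0 subrr.
rewrite -h /EE !mulr_sumr -sumrB -big_split -sumrB -big_split /=.
by apply: eq_bigr => m _; rewrite /WW; ring.
Qed.

Lemma bin_mid k : ('C(k.+1.*2, k.+1) = 2 * 'C(k.*2.+1, k.+1))%N.
Proof.
rewrite doubleS binS.
have -> : 'C(k.*2.+1, k) = 'C(k.*2.+1, k.+1).
  rewrite -(bin_sub (n:=k.*2.+1) (m:=k)); last lia.
  congr binomial; rewrite -addnn; lia.
by rewrite mul2n addnn.
Qed.

Lemma termk n k : gg k.+1 * bz k.+1 (Posz n) = 2 * (tD n k)%:R.
Proof.
rewrite /gg /bz /tD.
case: ifP => h.
  rewrite ifT; last lia.
  by rewrite -natrM bin_mid -mulnA natrM.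
rewrite mulr0; case: ifP => h2; last by rewrite mulr0.
rewrite (@bin_small (n - k.*2.+2)) ?muln0 ?mulr0 //; move/negbT: h; lia.
Qed.

Lemma EE_Df N n : (n < N)%N -> EE N (Posz n) = 2 * (Df n)%:~R + 1.
Proof.
case: N => [//|N] hn.
rewrite /EE big_ord_recl.
have e0 : gg 0 * bz 0 (Posz n) = 1 by rewrite /gg /bz /= ?mul0n ?leq0n /= ?subn0 ?bin0 ?mulr1.
rewrite e0 addrC; congr (_ + _).
transitivity (\sum_(i < N) 2 * ((tD n i)%:R : rat)).
  by apply: eq_bigr => i _; rewrite -termk.
rewrite /Df rmorph_sum mulr_sumr.
rewrite [RHS](big_ord_widen N (fun i => 2 * ((Posz (tD n i))%:~R : rat))); last lia.
rewrite [RHS]big_mkcond /=; apply: eq_bigr => i _.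
case: ifP => // hi.
rewrite /tD ifF ?mulr0 //; move/negbT: hi; apply/contraNF; lia.
Qed.

Lemma dseq_EE N z : z < Posz N -> dseq z = EE N z / 2.
Proof.
case: z => [n|k] hz; last first.
  by rewrite /= /EE big1 ?mul0r // => m _; rewrite bz_neg ?mulr0.
rewrite /= Delta_Dn Dn_Df EE_Df; last by rewrite -ltz_nat.
have h2 : (2 : rat) ^+ n != 0 by rewrite expf_neq0.
by field.
Qed.

Theorem mainTheorem15 :
  (forall n : nat, (1 <= n)%N ->
     dseq n%:Z
     - (2 - 1 / n%:R) * dseq (n%:Z - 1)
     + (1 - 1 / n%:R) * dseq (n%:Z - 2)
     - (4 - 6 / n%:R) * dseq (n%:Z - 3)
     + (4 - 8 / n%:R) * dseq (n%:Z - 4) = 0)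
  /\
  (forall n : nat, (4 <= n)%N ->
     Delta n =
       1 / (n%:R * 2 ^+ n)
       + (1 / (2 * n%:R) - 1 / 4) * Delta (n - 4)
       + (1 / 2 - 3 / (4 * n%:R)) * Delta (n - 3)
       + (1 / (4 * n%:R) - 1 / 4) * Delta (n - 2)
       + (1 - 1 / (2 * n%:R)) * Delta (n - 1)).
Proof.
have P1 : forall n : nat, (1 <= n)%N ->
     dseq n%:Z
     - (2 - 1 / n%:R) * dseq (n%:Z - 1)
     + (1 - 1 / n%:R) * dseq (n%:Z - 2)
     - (4 - 6 / n%:R) * dseq (n%:Z - 3)
     + (4 - 8 / n%:R) * dseq (n%:Z - 4) = 0.
  move=> n hn.
  have hn0 : (n%:R : rat) != 0 by rewrite pnatr_eq0 -lt0n.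
  rewrite !(@dseq_EE n.+1); try lia.
  have H := @EE_rec n.+1 n%:Z ltac:(lia).
  rewrite intr_pos in H.
  rewrite -[RHS](mul0r ((2 * n%:R)^-1 : rat)) -H.
  by field.
split => // n hn.
have H := P1 n (leq_trans (isT : (1 <= 4)%N) hn).
have [k hk] : exists k, n = k.+4 by exists (n - 4)%N; lia.
subst n.
have e1 : (k.+4)%:Z - 1 = Posz k.+3 by lia.
have e2 : (k.+4)%:Z - 2 = Posz k.+2 by lia.
have e3 : (k.+4)%:Z - 3 = Posz k.+1 by lia.
have e4 : (k.+4)%:Z - 4 = Posz k by lia.
rewrite e1 e2 e3 e4 /= in H.
have -> : (k.+4 - 4 = k)%N by lia.
have -> : (k.+4 - 3 = k.+1)%N by lia.
have -> : (k.+4 - 2 = k.+2)%N by lia.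
have -> : (k.+4 - 1 = k.+3)%N by lia.
have hn0 : ((k.+4)%:R : rat) != 0 by rewrite pnatr_eq0.
have hx : (2 : rat) ^+ k != 0 by rewrite expf_neq0.
rewrite !exprS in H *.
apply/eqP; rewrite -subr_eq0; apply/eqP.
rewrite -[RHS](mul0r ((2 * (2 * (2 * (2 * 2 ^+ k))))^-1 : rat)) -H.
field.
rewrite hx /=; have := ler0n rat k; apply/contraTneq => E; lra.
Qed.
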